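(* There exists a symmetric fractional hedonic game that admits no individually stable partition.
   Context: A fractional hedonic game (FHG) on agents $N$ is given by utility functions $v_i:N\to\mathbb R$ with $v_i(i)=0$; agent $i$'s utility for a coalition $C\ni i$ is $\frac{1}{|C|}\sum_{j\in C}v_i(j)$, and $i$ prefers coalitions with higher utility. The FHG is symmetric if $v_i(j)=v_j(i)$ for all $i,j$. An IS deviation of agent $i$ from partition $\pi$ to $\pi'$ is a move of $i$ alone from $\pi(i)$ into another coalition of $\pi$ or into a new singleton such that $i$ strictly prefers $\pi'(i)$ to $\pi(i)$ and every $j\in\pi'(i)\setminus\{i\}$ weakly prefers $\pi'(j)$ to $\pi(j)$. A partition is individually stable (IS) if no IS deviation is possible from it. *)

(* Defs.v *)
From HB Require Import structures.
From mathcomp Require Import all_boot all_order all_algebra.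
From mathcomp Require Import reals.
Set Implicit Arguments. Unset Strict Implicit. Unset Printing Implicit Defensive.
Import Order.TTheory GRing.Theory Num.Theory.
Local Open Scope ring_scope.

Section FHG.
Variables (R : realType) (T : finType) (v : T -> T -> R).

Definition fhg_valid := forall i, v i i = 0.
Definition fhg_symmetric := forall i j, v i j = v j i.

Definition fhg_util (i : T) (C : {set T}) : R :=
  (\sum_(j in C) v i j) / (#|C|%:R).

(* the partition obtained from P when agent i leaves its coalition
   pblock P i and joins C (C \in P, or C = set0 for a new singleton) *)
Definition move_partition (P : {set {set T}}) (i : T) (C : {set T})
  : {set {set T}} :=
  ((P :\ pblock P i :\ C) :|: [set pblock P i :\ i; i |: C]) :\ set0.

Definition IS_deviation (P : {set {set T}}) (i : T) (C : {set T}) : Prop :=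
  let P' := move_partition P i C in
  ((C \in P /\ C != pblock P i) \/ C = set0) /\
  fhg_util i (pblock P i) < fhg_util i (pblock P' i) /\
  (forall j, j \in pblock P' i -> j != i ->
     fhg_util j (pblock P j) <= fhg_util j (pblock P' j)).

Definition individually_stable (P : {set {set T}}) : Prop :=
  partition P [set: T] /\ ~ (exists i C, IS_deviation P i C).

End FHG.

(* Main.v *)
Require Import Defs.
From HB Require Import structures.
From mathcomp Require Import all_boot all_order all_algebra.
From mathcomp Require Import reals.
From Stdlib Require Import ZArith.
From mathcomp Require Import ssrZ zify.
Set Implicit Arguments. Unset Strict Implicit. Unset Printing Implicit Defensive.
Import Order.TTheory GRing.Theory Num.Theory.


Definition NA := 7%nat.

Local Open Scope Z_scope.
Definition edges : seq (nat * nat * Z) :=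
  [:: (0%nat, 1%nat, 22); (0%nat, 2%nat, 36); (0%nat, 3%nat, 34); (0%nat, 5%nat, 18); (1%nat, 3%nat, 18); (1%nat, 4%nat, 18); (2%nat, 5%nat, 18); (2%nat, 6%nat, 34); (3%nat, 4%nat, 36); (4%nat, 6%nat, 37); (5%nat, 6%nat, 23)].
Definition wZ (i j : nat) : Z :=
  if (i == j)%nat then 0 else
  match [seq e <- edges | ((e.1.1 == i) && (e.1.2 == j)) || ((e.1.1 == j) && (e.1.2 == i))]%nat with
  | e :: _ => e.2 | [::] => -1000 end.
Fixpoint sumZ (i : nat) (l : seq nat) : Z :=
  match l with [::] => 0 | j :: l' => wZ i j + sumZ i l' end.
Local Close Scope Z_scope.

Definition lab (s : seq nat) (i : nat) := nth 0%nat s i.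
Definition members (s : seq nat) (x : nat) := [seq j <- iota 0 NA | lab s j == x].
Definition dev_single (s : seq nat) (i : nat) :=
  let B := members s (lab s i) in (1 < size B) && Z.ltb (sumZ i B) 0.
Definition dev_join (s : seq nat) (i c : nat) :=
  let B := members s (lab s i) in let C := members s c in
  [&& lab s c == c, c != lab s i,
      Z.ltb (sumZ i B * Z.of_nat (size C).+1) (sumZ i C * Z.of_nat (size B)) &
      all (fun j => Z.leb (sumZ j C) (wZ j i * Z.of_nat (size C))) C].
Definition has_dev (s : seq nat) :=
  has (fun i => dev_single s i || has (dev_join s i) (iota 0 NA)) (iota 0 NA).
Fixpoint gen (k : nat) : seq (seq nat) :=
  match k with
  | 0 => [:: [::]]
  | k'.+1 => flatten [seq [seq rcons s x | x <- k' :: [seq r <- iota 0 k' | nth 0 s r == r]] | s <- gen k']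
  end.
Lemma all_dev : all has_dev (gen NA).
Proof. vm_compute. reflexivity. Qed.

Lemma wZ_sym i j : wZ i j = wZ j i.
Proof. by rewrite /wZ eq_sym; under eq_filter do rewrite orbC. Qed.

Lemma wZ_diag i : wZ i i = Z0.
Proof. by rewrite /wZ eqxx. Qed.

Definition valid k (s : seq nat) :=
  (size s == k) && all (fun i => (nth 0 s i == i) || ((nth 0 s i < i) && (nth 0 s (nth 0 s i) == nth 0 s i))) (iota 0 k).

Lemma gen_complete k s : valid k s -> s \in gen k.
Proof.
elim: k s => [|k IH] s /andP[/eqP sz hall].
  by case: s sz hall.
case/lastP: s sz hall => [//|s' x] sz hall.
have sz' : size s' = k by move: sz; rewrite size_rcons => -[].
have hn : forall i, i < k -> nth 0 (rcons s' x) i = nth 0 s' i.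
  by move=> i hi; rewrite nth_rcons sz' hi.
have hx : nth 0 (rcons s' x) k = x by rewrite nth_rcons sz' ltnn eqxx.
rewrite /=; apply/flatten_mapP; exists s'.
  apply: IH; rewrite /valid sz' eqxx /=; apply/allP => i; rewrite mem_iota add0n /= => hi.
  have := allP hall i; rewrite mem_iota add0n /= ltnS (ltnW hi) => /(_ isT).
  rewrite hn //; case/orP => [-> //| /andP[lt e]]; apply/orP; right.
  by rewrite lt /= -hn ?(ltn_trans lt hi).
have := allP hall k; rewrite mem_iota add0n /= ltnSn => /(_ isT).
rewrite hx; case/orP => [/eqP -> | /andP[lt e]]; first by rewrite mem_head.
rewrite in_cons; apply/orP; right; apply/mapP; exists x => //.
by rewrite mem_filter mem_iota lt /= andbT -hn.
Qed.

Local Open Scope ring_scope.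
Lemma big_list (V : nmodType) (F : 'I_NA -> V) (l : seq nat) :
  uniq l -> all (fun k => (k < NA)%nat) l ->
  \sum_(j in [set j : 'I_NA | val j \in l]) F j = \sum_(k <- l) F (inord k) /\
  #|[set j : 'I_NA | val j \in l]| = size l.
Proof.
elim: l => [|x l IH] /=.
  have -> : [set j : 'I_NA | val j \in [::]] = set0 by apply/setP => j; rewrite !inE.
  by rewrite big_set0 big_nil cards0.
move=> /andP[xl ul] /andP[xN aN].
have -> : [set j : 'I_NA | val j \in x :: l] = inord x |: [set j : 'I_NA | val j \in l].
  apply/setP => j; rewrite !inE -val_eqE /= inordK //.
have nin : inord x \notin [set j : 'I_NA | val j \in l] by rewrite inE /= inordK.
rewrite big_setU1 // cardsU1 nin big_cons; case: (IH ul aN) => -> ->; done.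
Qed.

Definition vv (R : realType) (i j : 'I_NA) : R := (int_of_Z (wZ i j))%:~R.

Lemma sumZ_R (R : realType) (i : 'I_NA) (l : seq nat) : all (fun k => (k < NA)%nat) l ->
  \sum_(k <- l) vv R i (inord k) = (int_of_Z (sumZ i l))%:~R.
Proof.
elim: l => [|x l IH] /=; first by rewrite big_nil.
move=> /andP[xN aN]; rewrite big_cons IH // /vv inordK // raddfD /= intrD.
by [].
Qed.

Lemma util_list (R : realType) (i : 'I_NA) (l : seq nat) : uniq l -> all (fun k => (k < NA)%nat) l ->
  fhg_util (vv R) i [set j : 'I_NA | val j \in l] = (int_of_Z (sumZ i l))%:~R / (size l)%:R.
Proof.
move=> ul aN; rewrite /fhg_util; case: (big_list (vv R i) ul aN) => -> ->.
by rewrite sumZ_R.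
Qed.

Lemma intr_natE (R : realType) (n : nat) : ((n%:Z)%:~R : R) = n%:R.
Proof. by []. Qed.

Lemma frac_lt (R : realType) (a c : Z) (b d : nat) : (0 < b)%nat -> (0 < d)%nat ->
  Z.ltb (a * Z.of_nat d) (c * Z.of_nat b) ->
  (int_of_Z a)%:~R / b%:R < (int_of_Z c)%:~R / d%:R :> R.
Proof.
move=> b0 d0 /Z.ltb_lt h.
rewrite ltr_pdivrMr ?ltr0n // mulrAC ltr_pdivlMr ?ltr0n //.
rewrite -!intr_natE -!intrM ltr_int; lia.
Qed.

Lemma frac_le (R : realType) (a c : Z) (b d : nat) : (0 < b)%nat -> (0 < d)%nat ->
  (a * Z.of_nat d <= c * Z.of_nat b)%Z ->
  (int_of_Z a)%:~R / b%:R <= (int_of_Z c)%:~R / d%:R :> R.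
Proof.
move=> b0 d0 h.
rewrite ler_pdivrMr ?ltr0n // mulrAC ler_pdivlMr ?ltr0n //.
rewrite -!intr_natE -!intrM ler_int; lia.
Qed.

Lemma frac_neg (R : realType) (a : Z) (b : nat) : (0 < b)%nat -> Z.ltb a 0 ->
  (int_of_Z a)%:~R / b%:R < 0 :> R.
Proof.
move=> b0 /Z.ltb_lt h; rewrite ltr_pdivrMr ?ltr0n // mul0r -[0]/((0%:Z)%:~R) ltr_int; lia.
Qed.

Lemma pblock_uniq (T : finType) (Q : {set {set T}}) x E : E \in Q -> x \in E ->
  (forall D, D \in Q -> x \in D -> D = E) -> pblock Q x = E.
Proof.
move=> EQ xE h; rewrite /pblock; case: pickP => [D /andP[DQ xD] | /(_ E)] /=.
  exact: h.
by rewrite EQ xE.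
Qed.

Lemma move_pblock (T : finType) (P : {set {set T}}) i C x :
  trivIset P -> i \in cover P -> ((C \in P /\ C != pblock P i) \/ C = set0) ->
  x \in i |: C -> pblock (move_partition P i C) x = i |: C.
Proof.
move=> htriv icov hC xin; apply: pblock_uniq => //.
  rewrite /move_partition !inE eqxx !orbT andbT.
  by apply/eqP => e; have := setU11 i C; rewrite e inE.
move=> D; rewrite /move_partition !inE => /andP[Dn0 /orP[/andP[DC /andP[DB DP]] | /orP[/eqP DBi | /eqP -> //]]] xD.
  move: xin; rewrite !inE => /orP[/eqP xi | xC].
    have iD : i \in D by rewrite -xi.
    by move: DB; rewrite (def_pblock htriv DP iD) eqxx.
  case: hC => [[CP _] | C0]; last by move: xC; rewrite C0 inE.
  by move: DC; rewrite -(def_pblock htriv DP xD) (def_pblock htriv CP xC) eqxx.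
move: xD; rewrite DBi !inE => /andP[xni xB].
move: xin; rewrite !inE (negbTE xni) /= => xC.
case: hC => [[CP CB] | C0]; last by move: xC; rewrite C0 inE.
have BP : pblock P i \in P by apply: pblock_mem.
by move: CB; rewrite -(def_pblock htriv CP xC) (def_pblock htriv BP xB) eqxx.
Qed.

Section Labels.
Variable P : {set {set 'I_NA}}.
Hypothesis hcov : cover P = [set: 'I_NA].
Hypothesis htriv : trivIset P.

Lemma incov (x : 'I_NA) : x \in cover P.
Proof. by rewrite hcov inE. Qed.

Definition plab (i : 'I_NA) : 'I_NA := [arg min_(j < i in pblock P i) (j : nat)].

Lemma plabP i : plab i \in pblock P i /\ forall k, k \in pblock P i -> (plab i <= k)%nat.
Proof.
rewrite /plab; case: arg_minnP => [|j jin jmin]; first by rewrite mem_pblock incov.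
by split.
Qed.

Lemma plab_block i j : pblock P i = pblock P j -> plab i = plab j.
Proof.
move=> e; have [ai mi] := plabP i; have [aj mj] := plabP j.
by apply: val_inj; apply/eqP; rewrite eqn_leq mi ?e // mj -?e.
Qed.

Lemma plab_eq i j : (plab i == plab j) = (j \in pblock P i).
Proof.
apply/eqP/idP => [e | jin].
  have [ai _] := plabP i; have [aj _] := plabP j.
  have h1 : pblock P (plab i) = pblock P i := same_pblock htriv ai.
  have h2 : pblock P (plab j) = pblock P j := same_pblock htriv aj.
  by rewrite -h1 e h2 mem_pblock incov.
by apply: plab_block; rewrite (same_pblock htriv jin).
Qed.

Definition sP : seq nat := mkseq (fun k => val (plab (inord k))) NA.

Lemma nth_sP k : (k < NA)%nat -> nth 0 sP k = plab (inord k).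
Proof. by move=> hk; rewrite nth_mkseq. Qed.

Lemma valid_sP : valid NA sP.
Proof.
rewrite /valid size_mkseq eqxx andTb; apply/allP => k; rewrite mem_iota add0n /= => hk.
rewrite !nth_sP //.
set l := plab (inord k).
have [lin lmin] := plabP (inord k).
have lk : (l <= k)%nat.
  by have := lmin (inord k) (_ : _); rewrite inordK // mem_pblock incov => /(_ isT).
have ll : plab (inord (val l)) = l.
  rewrite inord_val; apply: plab_block; exact: same_pblock htriv lin.
by rewrite ll eqxx andbT -leq_eqVlt.
Qed.

Lemma members_set i : (i < NA)%nat ->
  [set j : 'I_NA | val j \in members sP (lab sP i)] = pblock P (inord i).
Proof.
move=> hi; apply/setP => j; rewrite inE mem_filter mem_iota /= ltn_ord andbT /lab.
by rewrite !nth_sP // inord_val val_eqE eq_sym plab_eq.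
Qed.

End Labels.

Lemma members_uniq s x : uniq (members s x).
Proof. exact/filter_uniq/iota_uniq. Qed.

Lemma members_lt s x : all (fun k => (k < NA)%nat) (members s x).
Proof. by apply/allP => k; rewrite mem_filter mem_iota add0n => /andP[_ /andP[]]. Qed.

Lemma mem_members s i : (i < NA)%nat -> i \in members s (lab s i).
Proof. by move=> hi; rewrite mem_filter eqxx mem_iota add0n hi. Qed.


Theorem theorem5p1 (R : realType) :
  exists (n : nat) (v : 'I_n -> 'I_n -> R),
    fhg_valid v /\ fhg_symmetric v /\
    forall P : {set {set 'I_n}}, ~ individually_stable v P.
Proof.
exists NA, (vv R); split; first by move=> i; rewrite /vv wZ_diag.
split; first by move=> i j; rewrite /vv wZ_sym.
move=> P [hP hno]; apply: hno.
case/and3P: hP => /eqP hcov htriv _.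
have icov : forall x : 'I_NA, x \in cover P by move=> x; rewrite hcov inE.
have := allP all_dev _ (gen_complete (valid_sP hcov htriv)).
set s := sP P => hd; move: hd.
case/hasP => i; rewrite mem_iota add0n => /andP[_ hi].
set I := (inord i : 'I_NA).
have hB := members_set hcov htriv hi.
set M := members s (lab s i) in hB.
have Mpos : (0 < size M)%nat.
  by rewrite lt0n size_eq0; apply/eqP => e; have := mem_members s hi; rewrite -/M e.
case/orP => [hs | /hasP[c]].
  exists I, set0; split; first by right.
  have pb := move_pblock htriv (icov I) (or_intror erefl) (setU11 I set0).
  rewrite pb setU0; split.
    rewrite -hB util_list ?members_uniq ?members_lt //.
    rewrite /fhg_util big_set1 cards1 /vv wZ_diag /= mul0r.
    rewrite /I inordK //; apply: frac_neg => //; by case/andP: hs.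
  by move=> j; rewrite inE => /eqP ->; rewrite eqxx.
rewrite mem_iota add0n => /andP[_ hc] /and4P[/eqP cc cl hlt hacc].
set C := pblock P (inord c).
have hC := members_set hcov htriv hc.
rewrite /lab -/(lab s c) cc in hC.
set Mc := members s c in hC hlt hacc.
have iMc : i \notin Mc.
  by rewrite mem_filter negb_and; apply/orP; left; rewrite eq_sym.
have hIC : I |: C = [set j : 'I_NA | val j \in i :: Mc].
  by apply/setP => j; rewrite /C -hC !inE -val_eqE /= inordK.
have CP : C \in P by apply: pblock_mem.
have CB : C != pblock P I.
  apply/eqP => e.
  have : I \in C by rewrite e mem_pblock icov.
  by rewrite /C -hC inE /= inordK // (negbTE iMc).
have hCP : (C \in P /\ C != pblock P I) \/ C = set0 by left.
have uMc : uniq (i :: Mc) by rewrite /= iMc members_uniq.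
have aMc : all (fun k => (k < NA)%nat) (i :: Mc) by rewrite /= hi members_lt.
exists I, C; split => //.
rewrite (move_pblock htriv (icov I) hCP (setU11 I C)); split.
  rewrite hIC -hB !util_list ?members_uniq ?members_lt //.
  apply: frac_lt => //.
  by rewrite /= inordK // wZ_diag Z.add_0_l.
move=> j jin jI.
have jC : j \in C by move: jin; rewrite !inE (negbTE jI).
rewrite (move_pblock htriv (icov I) hCP jin) (def_pblock htriv CP jC).
rewrite hIC /C -hC !util_list ?members_uniq ?members_lt //.
have jM : val j \in Mc by move: jC; rewrite /C -hC inE.
have := allP hacc _ jM => /Z.leb_le h.
have Mcpos : (0 < size Mc)%nat.
  by rewrite lt0n size_eq0; apply/eqP => e; move: jM; rewrite e.
apply: frac_le => //=.
move: h => /= h; rewrite Zpos_P_of_succ_nat; nia.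
Qed.
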